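(* Let $\tau\ge\tfrac32$. For every family of probability distributions $\{p(a,b|x,y)\}_{a,b,x,y\in\{0,1\}}$ satisfying the no-signaling conditions (i.e. the marginals $p_A(a|x)=\sum_b p(a,b|x,y)$ are independent of $y$ and $p_B(b|y)=\sum_a p(a,b|x,y)$ are independent of $x$), in particular for all distributions arising from quantum states and local measurements, one has $S^{(\tau)}=p(0,0|0,0)-p(0,0|1,1)+(1-\tau)[p(0,0|0,1)+p(0,0|1,0)]-\tau[p(0,1|0,1)+p(1,0|1,0)]\le 0.$
   Context: $p(a,b|x,y)$ denotes the joint probability of outcomes $a,b\in\{0,1\}$ for Alice and Bob given their measurement settings $x,y\in\{0,1\}$; each $p(\cdot,\cdot|x,y)$ is a probability distribution on $\{0,1\}^2$. *)

(* Defs.v *)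
(* real numbers. Outcomes and settings in {0,1} are encoded
   as bool, with false = 0 and true = 1. *)
From Stdlib Require Import Reals Lra.
Open Scope R_scope.

(* A behaviour (correlation): p a b x y = p(a,b|x,y). *)
Definition behaviour := bool -> bool -> bool -> bool -> R.

Definition is_prob_family (p : behaviour) : Prop :=
  (forall a b x y, 0 <= p a b x y) /\
  (forall x y, p false false x y + p false true x y
             + p true false x y + p true true x y = 1).

Definition margA (p : behaviour) (a x y : bool) : R :=
  p a false x y + p a true x y.

Definition margB (p : behaviour) (b x y : bool) : R :=
  p false b x y + p true b x y.

Definition no_signaling (p : behaviour) : Prop :=
  (forall a x y y', margA p a x y = margA p a x y') /\
  (forall b x x' y, margB p b x y = margB p b x' y).

Definition S_tau (tau : R) (p : behaviour) : R :=
  p false false false false - p false false true true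
  + (1 - tau) * (p false false false true + p false false true false)
  - tau * (p false true false true + p true false true false).

(* Main.v *)
Require Import Defs.
From Stdlib Require Import Reals Lra.
Open Scope R_scope.

Theorem mainTheorem2 (tau : R) (p : behaviour) :
  3 / 2 <= tau -> is_prob_family p -> no_signaling p -> S_tau tau p <= 0.
Proof.
  intros Ht [Hpos Hsum] [HA HB].
  unfold S_tau.
  set (B := p false false false true + p false false true false
           + p false true false true + p true false true false).
  assert (HB0 : 0 <= B).
  { unfold B; pose proof (Hpos false false false true);
    pose proof (Hpos false false true false);
    pose proof (Hpos false true false true);
    pose proof (Hpos true false true false); lra. }
  assert (Hm : 0 <= (tau - 3/2) * B) by (apply Rmult_le_pos; lra).
  assert (Hc : p false false false false - p false false true true
    + p false false false true + p false false true false <= 3/2 * B).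
  { unfold B.
    pose proof (HA false false false true) as a1.
    pose proof (HA false true false true) as a2.
    pose proof (HA true false false true) as a3.
    pose proof (HA true true false true) as a4.
    pose proof (HB false false true false) as b1.
    pose proof (HB false true false true) as b2.
    pose proof (HB true false true false) as b3.
    pose proof (HB true true false true) as b4.
    unfold margA, margB in *.
    pose proof (Hsum false false); pose proof (Hsum false true);
    pose proof (Hsum true false); pose proof (Hsum true true).
    pose proof (Hpos false false false false).
    pose proof (Hpos false false false true).
    pose proof (Hpos false false true false).
    pose proof (Hpos false false true true).
    pose proof (Hpos false true false false).
    pose proof (Hpos false true false true).
    pose proof (Hpos false true true false).
    pose proof (Hpos false true true true).
    pose proof (Hpos true false false false).
    pose proof (Hpos true false false true).
    pose proof (Hpos true false true false).
    pose proof (Hpos true false true true).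
    pose proof (Hpos true true false false).
    pose proof (Hpos true true false true).
    pose proof (Hpos true true true false).
    pose proof (Hpos true true true true).
    lra. }
  unfold B in Hm, Hc.
  assert (E : (1 - tau) * (p false false false true + p false false true false)
   - tau * (p false true false true + p true false true false)
   = (p false false false true + p false false true false) - tau * (p false false false true + p false false true false
           + p false true false true + p true false true false)) by ring.
  assert (E2 : (tau - 3/2) * (p false false false true + p false false true false
           + p false true false true + p true false true false) = tau * (p false false false true + p false false true false
           + p false true false true + p true false true false) - 3/2 * (p false false false true + p false false true false
           + p false true false true + p true false true false)) by ring.
  lra.
Qed.
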